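(* Let $p$ be a prime, $\alpha\ge1$ and $\beta\ge0$. For every function $f:\mathbb{Z}_{p^\alpha}\to\mathbb{Z}$, $p^\beta$ divides $\Delta^{\beta(p^\alpha-1)+1}f(x)$ for all $x\in\mathbb{Z}_{p^\alpha}$.
   Context: For a function $f$ on $\mathbb{Z}_q=\mathbb{Z}/q\mathbb{Z}$ with values in $\mathbb{Z}$, $\Delta f(x):=f(x+1)-f(x)$ and $\Delta^k$ denotes the $k$-fold iterate. *)

(* Defs.v *)
From mathcomp Require Import all_boot all_order all_algebra.
Set Implicit Arguments. Unset Strict Implicit. Unset Printing Implicit Defensive.
Import GRing.Theory Num.Theory.
Local Open Scope ring_scope.

Definition Delta (q : nat) (f : 'Z_q -> int) : 'Z_q -> int :=
  fun x => f (x + 1) - f x.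

Definition DeltaN (q : nat) (k : nat) (f : 'Z_q -> int) : 'Z_q -> int :=
  iter k (@Delta q) f.

(* Main.v *)
Require Import Defs.
From mathcomp Require Import all_boot all_order all_algebra.
Set Implicit Arguments. Unset Strict Implicit. Unset Printing Implicit Defensive.
Import GRing.Theory Num.Theory.
Local Open Scope ring_scope.

Lemma polyid p a (hp : prime p) :
  (('X - 1)^+(p ^ a).-1 : {poly 'F_p}) = \sum_(i < p ^ a) 'X^i.
Proof.
have ch : p \in [pchar {poly 'F_p}] by rewrite (pchar_poly _ p) pchar_Fp.
have nq : [pchar {poly 'F_p}].-nat (p ^ a)%N.
  by rewrite (eq_pnat _ (pcharf_eq ch)) pnatX pnat_id.
have q0 : (0 < p ^ a)%N by rewrite expn_gt0 prime_gt0.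
have h1 : ('X - 1) ^+ (p ^ a) = ('X ^+ (p ^ a) - 1 : {poly 'F_p}).
  by rewrite exprDn_pchar // exprNn_pchar // expr1n.
have hX : ('X - 1 : {poly 'F_p}) != 0.
  by rewrite -polyC1 polyXsubC_eq0.
apply: (mulfI hX); rewrite -exprS prednK // h1.
by rewrite -subrX1.
Qed.

Lemma DeltaNS q n (g : 'Z_q -> int) x :
  DeltaN n.+1 g x = DeltaN n g (x + 1) - DeltaN n g x.
Proof. by []. Qed.

Lemma DeltaN_poly q n (g : 'Z_q -> int) x :
  DeltaN n g x = \sum_(j < n.+1) (('X - 1)^+n : {poly int})`_j * g (x + j%:R).
Proof.
elim: n x => [|n IH] x.
  by rewrite big_ord1 expr0 coefC /= mul1r addr0.
rewrite DeltaNS !IH.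
have hs : size (('X - 1)^+n.+1 : {poly int}) = n.+2.
  by rewrite -polyC1 size_exp_XsubC.
set c := (('X - 1)^+n : {poly int}).
have -> : (('X - 1)^+n.+1 : {poly int}) = c * 'X - c by rewrite exprSr mulrBr mulr1.
under [X in _ = X]eq_bigr => j _ do rewrite coefB coefMX mulrBl.
rewrite sumrB; congr (_ - _).
  rewrite [in RHS]big_ord_recl /= mul0r add0r; apply: eq_bigr => j _.
  by rewrite /bump /= add0n -natr1 addrA addrAC.
rewrite [in RHS]big_ord_recr /=.
have -> : c`_n.+1 = 0.
  by rewrite nth_default // /c -polyC1 size_exp_XsubC.
by rewrite mul0r addr0.
Qed.

Lemma coef_one p a (hp : prime p) j : (j < p ^ a)%N ->
  (((('X - 1)^+(p ^ a).-1 : {poly int})`_j)%:~R : 'F_p) = 1.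
Proof.
move=> hj.
have -> : (((('X - 1)^+(p ^ a).-1 : {poly int})`_j)%:~R : 'F_p) =
   (map_poly (intr : int -> 'F_p) (('X - 1)^+(p ^ a).-1))`_j by rewrite coef_map.
rewrite rmorphXn rmorphB /= map_polyX rmorph1 polyid // coef_sum.
rewrite (bigD1 (Ordinal hj)) //= coefXn eqxx big1 ?addr0 // => i hi.
rewrite coefXn; case: eqP => // hji; case/eqP: hi; apply: val_inj => /=.
by rewrite hji.
Qed.

Lemma key p a (hp : prime p) (g : 'Z_(p ^ a) -> int) x :
  (p%:Z %| DeltaN (p ^ a).-1 g x - \sum_(j < p ^ a) g (x + j%:R))%Z.
Proof.
have q0 : (0 < p ^ a)%N by rewrite expn_gt0 prime_gt0.
rewrite DeltaN_poly.
rewrite -(big_mkord xpredT (fun j => g (x + j%:R))).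
rewrite -(big_mkord xpredT (fun j => (('X - 1)^+(p ^ a).-1 : {poly int})`_j * g (x + j%:R))).
rewrite prednK // (dvdz_pcharf (pchar_Fp hp)) -sumrB rmorph_sum /=.
rewrite big_nat big1 // => j /= hj.
by rewrite intrB intrM coef_one // mul1r subrr.
Qed.

Lemma DeltaN_ext q n (f g : 'Z_q -> int) :
  (forall y, f y = g y) -> forall x, DeltaN n f x = DeltaN n g x.
Proof.
move=> H; elim: n => [|n IH] x; first exact: H.
by rewrite !DeltaNS !IH.
Qed.

Lemma DeltaN_lin q n (u h : 'Z_q -> int) (c : int) x :
  DeltaN n (fun y => u y + c * h y) x = DeltaN n u x + c * DeltaN n h x.
Proof.
elim: n x => [|n IH] x //.
by rewrite !DeltaNS !IH mulrBr opprD addrACA.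
Qed.

Lemma DeltaN_const q n (u : 'Z_q -> int) x :
  (forall y, u (y + 1) = u y) -> DeltaN n.+1 u x = 0.
Proof.
move=> H.
have -> : DeltaN n.+1 u x = DeltaN n (Delta u) x by rewrite /DeltaN iterSr.
rewrite (@DeltaN_ext _ _ _ (fun _ => 0)); last by move=> y; rewrite /Delta H subrr.
by elim: n x => [|n IH] x //; rewrite DeltaNS !IH subrr.
Qed.

Lemma telesc (F : nat -> int) m : F m.+1 = F 0 ->
  \sum_(0 <= j < m.+1) F j.+1 = \sum_(0 <= j < m.+1) F j.
Proof. by move=> H; rewrite big_nat_recr // big_nat_recl // H addrC. Qed.

Lemma shiftS q (q1 : (1 < q)%N) (g : 'Z_q -> int) y :
  \sum_(j < q) g (y + 1 + j%:R) = \sum_(j < q) g (y + j%:R).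
Proof.
have q0 : (0 < q)%N by apply: ltnW.
rewrite -(big_mkord xpredT (fun j => g (y + j%:R))).
rewrite -(big_mkord xpredT (fun j => g (y + 1 + j%:R))).
have := @telesc (fun j => g (y + j%:R)) q.-1; rewrite prednK // pchar_Zp // addr0.
move=> /(_ erefl) <-; apply: eq_bigr => j _.
by rewrite -natr1 addrA addrAC.
Qed.


Theorem lemma3p3 (p a b : nat) (hp : prime p) (ha : (1 <= a)%N)
  (f : 'Z_(p ^ a) -> int) (x : 'Z_(p ^ a)) :
  ((p ^ b)%:Z %| DeltaN (b * (p ^ a - 1) + 1) f x)%Z.
Proof.
have q1 : (1 < p ^ a)%N.
  by rewrite -(expn0 p) ltn_exp2l ?prime_gt1.
elim: b f x => [|b IH] f x; first by rewrite expn0 dvd1z.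
have -> : (b.+1 * (p ^ a - 1) + 1 = (b * (p ^ a - 1)).+1 + (p ^ a).-1)%N.
  by rewrite mulSn -subn1 addn1 addSn addnC.
rewrite /DeltaN iterD -/(DeltaN (p ^ a).-1 f) -/(DeltaN _ _).
set g := DeltaN (p ^ a).-1 f.
pose S y := \sum_(j < p ^ a) f (y + j%:R).
pose h y := ((g y - S y) %/ p%:Z)%Z.
have Hg : forall y, g y = S y + p%:Z * h y.
  move=> y; rewrite /h mulrC divzK; first by rewrite addrC subrK.
  exact: (key hp f y).
rewrite (DeltaN_ext _ Hg) DeltaN_lin DeltaN_const ?add0r; last first.
  by move=> y; rewrite /S shiftS.
rewrite expnS PoszM dvdz_mul //.
have := IH h x; by rewrite addn1.
Qed.
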